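(* Let $G$ be a connected (finite, simple) graph, $\mathcal{F}$ a maximum induced forest of $G$, $S=V(G)\setminus V(\mathcal{F})$, $H$ the contracted graph, and $B$ a skeleton of $H$ with the maximum possible number of 2-edges among all skeletons (all as defined in the context). Then every vertex of $S$ is incident in $B$ to at least one 2-edge.
   Context: A maximum induced forest of $G$ is an induced forest of $G$ with the maximum number of vertices. Let $\mathcal{T}$ be the set of connected components (trees) of $\mathcal{F}$ and $S=V(G)\setminus V(\mathcal{F})$. The graph $H$ has vertex set $\{x_T : T\in\mathcal{T}\}\cup S$ (the $x_T$ are called tree vertices, the vertices of $S$ non-tree vertices) and edge set consisting of all edges of $G[S]$ together with all pairs $ux_T$ with $u\in S$, $T\in\mathcal{T}$ such that $u$ has at least one neighbor in $V(T)$ in $G$. An edge $ux_T$ of $H$ is a 2-edge if $u$ has at least two neighbors in $V(T)$ in $G$; all other edges of $H$ (including all edges with both endpoints in $S$) are 1-edges. A skeleton is a spanning tree of $H$ rooted at some tree vertex, with all edges directed towards the root (an in-arborescence). *)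

(* Defs.v *)
From mathcomp Require Import all_boot.
Set Implicit Arguments. Unset Strict Implicit. Unset Printing Implicit Defensive.

Definition simple_graph (V : finType) (e : rel V) : Prop :=
  symmetric e /\ irreflexive e.

Definition connected_graph (V : finType) (e : rel V) : Prop :=
  (0 < #|V|) /\ forall x y : V, connect e x y.

Definition acyclic (T : finType) (r : rel T) : Prop :=
  forall s : seq T, uniq s -> 2 < size s -> ~~ cycle r s.

Definition induced (V : finType) (e : rel V) (F : {set V}) : rel V :=
  fun x y => [&& x \in F, y \in F & e x y].

Definition induced_forest (V : finType) (e : rel V) (F : {set V}) : Prop :=
  acyclic (induced e F).

Definition max_induced_forest (V : finType) (e : rel V) (F : {set V}) : Prop :=
  induced_forest e F /\
  forall F' : {set V}, induced_forest e F' -> #|F'| <= #|F|.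

Definition compF (V : finType) (e : rel V) (F : {set V}) (x : V) : {set V} :=
  [set y | connect (induced e F) x y].

Definition is_tree (V : finType) (e : rel V) (F : {set V}) (T : {set V}) : bool :=
  [exists x in F, T == compF e F x].

(* Vertices of H: inl T for a tree T (tree vertex x_T), inr u for u in S. *)
Definition HV (V : finType) : finType := ({set V} + V)%type.

Definition hvert (V : finType) (e : rel V) (F : {set V}) (x : HV V) : bool :=
  match x with
  | inl T => is_tree e F T
  | inr u => u \notin F
  end.

Definition hadj (V : finType) (e : rel V) (F : {set V}) : rel (HV V) :=
  fun x y =>
  match x, y with
  | inr u, inr v => [&& u \notin F, v \notin F & e u v]
  | inr u, inl T => [&& u \notin F, is_tree e F T & [exists w in T, e u w]]
  | inl T, inr u => [&& u \notin F, is_tree e F T & [exists w in T, e u w]]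
  | inl _, inl _ => false
  end.

Definition two_edge (V : finType) (e : rel V) (u : V) (T : {set V}) : bool :=
  1 < #|[set w in T | e u w]|.

Definition spanning_tree_H (V : finType) (e : rel V) (F : {set V})
    (B : rel (HV V)) : Prop :=
  symmetric B /\
  (forall x y, B x y -> hadj e F x y) /\
  (forall x y, hvert e F x -> hvert e F y -> connect B x y) /\
  acyclic B.

(* A skeleton: spanning tree of H together with a root that is a tree
   vertex (edges are then implicitly oriented towards the root). *)
Definition skeleton (V : finType) (e : rel V) (F : {set V})
    (B : rel (HV V)) (r : HV V) : Prop :=
  spanning_tree_H e F B /\ hvert e F r /\ (if r is inl _ then True else False).

(* Number of 2-edges of B: each 2-edge joins some u in S to some x_T,
   so it is counted once as a pair (u, T). *)
Definition n_two_edges (V : finType) (e : rel V) (B : rel (HV V)) : nat :=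
  #|[set p : V * {set V} | B (inr p.1) (inl p.2) && two_edge e p.1 p.2]|.

(* Main.v *)
Require Import Defs.
From mathcomp Require Import all_boot.
Set Implicit Arguments. Unset Strict Implicit. Unset Printing Implicit Defensive.

Section Gen.
Variable T : finType.

Definition rem_edge (S : rel T) (x y : T) : rel T :=
  fun p q => S p q && ~~ (((p == x) && (q == y)) || ((p == y) && (q == x))).
Definition add_edge (S : rel T) (a b : T) : rel T :=
  fun p q => [|| S p q, (p == a) && (q == b) | (p == b) && (q == a)].

Lemma rem_edge_sym S x y : symmetric S -> symmetric (rem_edge S x y).
Proof.
move=> sS p q; rewrite /rem_edge sS; congr (_ && ~~ _).
by rewrite orbC (andbC (q == x)) (andbC (q == y)).
Qed.

Lemma add_edge_sym S a b : symmetric S -> symmetric (add_edge S a b).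
Proof.
move=> sS p q; rewrite /add_edge sS; congr (_ || _).
by rewrite orbC (andbC (q == a)) (andbC (q == b)).
Qed.

Lemma cycle_cons S x (p : seq T) : cycle S (x :: p) = path S x (rcons p x).
Proof. by []. Qed.

Lemma connect_add S a b x y : connect (add_edge S a b) x y ->
  connect S x y \/ (connect S x a /\ connect S b y) \/ (connect S x b /\ connect S a y).
Proof.
move/connectP => [p hp ->]; elim: p x hp => [|z p IH] x /=.
  by move=> _; left; apply: connect0.
move=> /andP [hxz hp]; have := IH z hp.
set y' := last z p.
case/orP: hxz => [|/orP [] /andP [/eqP -> /eqP ->]].
- move=> sxz; have cxz : connect S x z := connect1 sxz.
  case=> [h|[[h1 h2]|[h1 h2]]].
  + left; exact: connect_trans cxz h.
  + right; left; split=> //; exact: connect_trans cxz h1.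
  + right; right; split=> //; exact: connect_trans cxz h1.
- case=> [h|[[h1 h2]|[h1 h2]]].
  + by right; left; split => //; apply: connect0.
  + by right; left; split => //; apply: connect0.
  + by left.
- case=> [h|[[h1 h2]|[h1 h2]]].
  + by right; right; split => //; apply: connect0.
  + by left.
  + by right; right; split.
Qed.

Lemma cut_edge S x y : symmetric S -> acyclic S -> S x y -> x != y ->
  ~ connect (rem_edge S x y) x y.
Proof.
move=> sS aS Sxy nxy /connectP [p hp ly].
case/shortenP: hp ly => p' hp' up' _ ly.
case: p' hp' up' ly => [|z q]; first by move=> _ _ /= h; rewrite h eqxx in nxy.
case: q => [|w q].
  by move=> /= /andP [/andP [_ h] _] _ ly; rewrite ly !eqxx in h.
move=> hp' up' ly.
have : ~~ cycle S [:: x, z, w & q] by apply: aS.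
rewrite cycle_cons rcons_path (sub_path _ hp').
  by rewrite -ly sS Sxy.
by move=> a b /andP [].
Qed.

Lemma acyclic_crit S : symmetric S ->
  (forall x y, S x y -> x != y -> ~ connect (rem_edge S x y) x y) -> acyclic S.
Proof.
move=> sS H s us ss; apply/negP.
case: s us ss => [|x [|y [|q1 q2]]] // us _.
rewrite cycle_cons /= => /andP [Sxy /andP [Syq1 hp]].
move: us; rewrite /= !inE !negb_or => /andP [/and3P [nxy nxq1 nxq2] /andP [/andP [nyq1 nyq2] _]].
apply: (H x y Sxy nxy).
rewrite (sym_connect_sym (rem_edge_sym x y sS)).
apply/connectP; exists (q1 :: rcons q2 x); last by rewrite /= last_rcons.
rewrite /= {1}/rem_edge Syq1 eqxx (eq_sym y x) (negbTE nxy) /=; rewrite (eq_sym q1) (negbTE nxq1) ?andbF /=.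
apply: (@sub_in_path _ (predC1 y) S).
  move=> a b /= ha hb Sab; rewrite /rem_edge Sab /=.
  by rewrite (negbTE ha) (negbTE hb) !andbF.
rewrite /= all_rcons /= eq_sym nyq1 nxy /=.
  by apply/allP => z zq /=; apply: contraNneq nyq2 => <-.
exact: hp.
Qed.
End Gen.

Lemma forest_two (V : finType) (e : rel V) (F : {set V}) (u : V) :
  simple_graph e -> max_induced_forest e F -> u \notin F ->
  exists T : {set V}, hadj e F (inr u) (inl T) && two_edge e u T.
Proof.
move=> [se ie] [fF mF] uF.
case: (boolP [exists T : {set V}, hadj e F (inr u) (inl T) && two_edge e u T]).
  by move/existsP.
move=> nE; exfalso.
have : induced_forest e (u |: F).
  move=> s us ss; apply/negP => cs.
  case: (boolP (u \in s)) => usin; last first.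
    have : cycle (induced e F) s.
      apply: (@sub_in_cycle _ (predC1 u) (induced e (u |: F))) => //.
        move=> x y /= xu yu /and3P [xF yF exy].
        move: xF yF; rewrite !in_setU1 (negbTE xu) (negbTE yu) /= => xF yF.
        by rewrite /induced xF yF exy.
      by apply/allP => x xs /=; apply: contraNneq usin => <-.
    by apply/negP; apply: fF.
  case/rot_to: usin => i p hrot.
  have cs' : cycle (induced e (u |: F)) (u :: p) by rewrite -hrot rot_cycle.
  have us' : uniq (u :: p) by rewrite -hrot rot_uniq.
  have ss' : 2 < size (u :: p) by rewrite -hrot size_rot.
  case: p hrot cs' us' ss' => [|a [|c p2]] // _ cs' us' _.
  set p1 := c :: p2.
  move: cs'; rewrite cycle_cons -/p1 (_ : rcons (a :: p1) u = a :: rcons p1 u) //.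
  move=> cs0; have /andP [Rua hpb] : induced e (u |: F) u a && path (induced e (u |: F)) a (rcons p1 u) := cs0.
  move: hpb; rewrite rcons_path => /andP [hp Rbu].
  set b := last a p1 in Rbu.
  have Pp : all (predC1 u) (a :: p1).
    case/andP: us' => nu _; apply/allP => x xs /=.
    by apply: contraNneq nu => <-.
  have hpF : path (induced e F) a p1.
    apply: (@sub_in_path _ (predC1 u) (induced e (u |: F))) => //.
    move=> x y /= xu yu /and3P [xF yF exy].
    move: xF yF; rewrite !in_setU1 (negbTE xu) (negbTE yu) /= => xF yF.
    by rewrite /induced xF yF exy.
  have cab : connect (induced e F) a b by apply/connectP; exists p1.
  move: Rua; rewrite /induced => /and3P [_ aUF eua].
  move: Rbu; rewrite /induced => /and3P [_ _ ebu].
  have au : a != u by move: Pp => /andP [].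
  have aF : a \in F by move: aUF; rewrite in_setU1 (negbTE au).
  have ab : a != b.
    move: us' => /= /andP [_ /andP [nap1 _]].
    apply: contraNneq nap1 => ->; rewrite /b /p1 /=; exact: mem_last.
  move/negP: nE; apply; apply/existsP; exists (compF e F a).
  apply/andP; split.
    rewrite /hadj uF /is_tree /=; apply/andP; split.
      by apply/existsP; exists a; rewrite aF eqxx.
    by apply/existsP; exists a; rewrite /compF inE connect0 eua.
  apply/card_gt1P; exists a, b; split => //.
    by rewrite inE /compF inE connect0 eua.
  by rewrite inE /compF inE cab se ebu.
move/mF; rewrite cardsU1 uF.
by rewrite add1n ltnn.
Qed.

Lemma connect_mono (T : finType) (e1 e2 : rel T) (h : subrel e1 e2) (x y : T) :
  connect e1 x y -> connect e2 x y.
Proof. by apply: connect_sub => x' y' /h; apply: connect1. Qed.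
Arguments connect_mono {T e1 e2} h {x y}.

Theorem lemma4 (V : finType) (e : rel V) (F : {set V})
    (B : rel (HV V)) (r : HV V) :
  simple_graph e ->
  connected_graph e ->
  max_induced_forest e F ->
  skeleton e F B r ->
  (forall (B' : rel (HV V)) (r' : HV V),
      skeleton e F B' r' -> n_two_edges e B' <= n_two_edges e B) ->
  forall u : V, u \notin F ->
    exists T : {set V}, B (inr u) (inl T) && two_edge e u T.
Proof.
move=> sg cg mF [[sB [subB [conn acB]]] [hr rr]] maxB u uF.
case: (boolP [exists T, B (inr u) (inl T) && two_edge e u T]).
  by move/existsP.
move=> nE; exfalso.
have nE' : forall T, B (inr u) (inl T) -> ~~ two_edge e u T.
  move=> T BT; apply: contraNN nE => tT; apply/existsP; exists T; by rewrite BT.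
have [T /andP [hT tT]] := forest_two sg mF uF.
have hTv : hvert e F (inl T) by move: hT => /and3P [].
have irrH : forall x, ~~ hadj e F x x.
  case: sg => _ ie [U|v] //=; by rewrite ie !andbF.
set c : HV V := inr u.
set b : HV V := inl T.
have := conn c b uF hTv.
move/connectP => [p hp lp].
case/shortenP: hp lp => p' hp' up' _ lp.
case: p' hp' up' lp => [|d q]; first by move=> _ _; rewrite /b /c /=.
move=> /= /andP [Bcd hq] up' lp.
have cd : c != d by apply: contraNneq (irrH c) => {2}->; exact: subB.
set R := rem_edge B c d.
set B' := add_edge R c b.
have sR : symmetric R by apply: rem_edge_sym.
have sB' : symmetric B' by apply: add_edge_sym.
have RB : subrel R B by move=> x y /andP [].
have RB' : subrel R B' by move=> x y h; rewrite /B' /add_edge h.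
have connR : connect R d b.
  apply/connectP; exists q => //.
  apply: (@sub_in_path _ (predC1 c) B) => //.
    move=> x y /= xc yc Bxy; rewrite /R /rem_edge Bxy /=.
    by rewrite (negbTE xc) (negbTE yc) andbF.
  move: up' => /andP [ncd _]; apply/allP => x xs /=.
  by apply: contraNneq ncd => <-.
have key : ~ connect R c b.
  move=> h; apply: (cut_edge sB acB Bcd cd).
  apply: connect_trans h _; by rewrite (sym_connect_sym sR).
have skel : skeleton e F B' r.
  split; last by split.
  split => //; split.
    move=> x y /orP [/RB /subB // | /orP [] /andP [/eqP -> /eqP ->] //].
  split.
    have cx : forall x, hvert e F x -> connect B' c x.
      move=> x hx.
      have : connect (add_edge R c d) c x.
        apply: connect_mono (conn c x uF hx) => y z Byz.
        rewrite /add_edge /R /rem_edge Byz /=.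
        by case: ((y == c) && (z == d) || (y == d) && (z == c)); rewrite ?orbT.
      case/connect_add => [h | [[_ h] | [_ h]]].
      - exact: connect_mono h.
      - apply: connect_trans _ (connect_mono RB' h).
        apply: connect_trans (connect1 (_ : B' c b)) _.
          by rewrite /B' /add_edge !eqxx orbT.
        by apply: (connect_mono RB'); rewrite (sym_connect_sym sR).
      - exact: connect_mono h.
    move=> x y hx hy; apply: connect_trans (cx y hy).
    by rewrite (sym_connect_sym sB'); apply: cx.
  apply: acyclic_crit => // x y Bxy nxy h.
  case/orP: Bxy => [Rxy | Nxy].
    have : connect (add_edge (rem_edge R x y) c b) x y.
      apply: connect_mono h => p0 q0 /andP [].
      rewrite /B' /add_edge /rem_edge => /orP [-> ->|-> _]; rewrite ?orbT //.
    case/connect_add => [h1 | [[h1 h2] | [h1 h2]]].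
    - apply: (cut_edge sB acB (RB _ _ Rxy) nxy).
      apply: connect_mono h1 => p0 q0 /andP [/RB Bpq nq]; by rewrite /rem_edge Bpq nq.
    - have rm : subrel (rem_edge R x y) R by move=> ? ? /andP [].
      apply: key; apply: connect_trans (_ : connect R c x) _.
        rewrite (sym_connect_sym sR). exact: (connect_mono rm h1).
      apply: connect_trans (connect1 Rxy) _.
      by rewrite (sym_connect_sym sR); exact: (connect_mono rm h2).
    - have rm : subrel (rem_edge R x y) R by move=> ? ? /andP [].
      apply: key; apply: connect_trans (_ : connect R c y) _.
        by exact: (connect_mono rm h2).
      apply: connect_trans (_ : connect R y x) _.
        by rewrite (sym_connect_sym sR); apply: connect1.
      by exact: (connect_mono rm h1).
  have hR : connect R x y.
    apply: connect_mono h => p0 q0 /andP [].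
    rewrite /B' /add_edge /rem_edge => /orP [// | ].
    case/orP: Nxy => /andP [/eqP -> /eqP ->] /orP [] /andP [/eqP -> /eqP ->];
      by rewrite !eqxx ?orbT.
  apply: key.
  case/orP: Nxy => /andP [/eqP ex /eqP ey]; move: hR; rewrite ex ey //.
  by rewrite (sym_connect_sym sR).
have := maxB B' r skel.
rewrite /n_two_edges.
set A := [set p0 : V * {set V} | B (inr p0.1) (inl p0.2) && two_edge e p0.1 p0.2].
have -> : [set p0 : V * {set V} | B' (inr p0.1) (inl p0.2) && two_edge e p0.1 p0.2]
    = (u, T) |: A.
  apply/setP => [[v U]]; rewrite !inE /=.
  rewrite /B' /add_edge /R /rem_edge /c /b /=.
  have er : forall a a' : V, (inr a == inr a' :> HV V) = (a == a') by [].
  have el : forall a a' : {set V}, (inl a == inl a' :> HV V) = (a == a') by [].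
  have elr : forall (a : {set V}) (a' : V), (inl a == inr a' :> HV V) = false by [].
  have ep : forall a a' (A1 A2 : {set V}), ((a, A1) == (a', A2)) = (a == a') && (A1 == A2) by [].
  rewrite !er !el !elr ep !andbF /= orbF.
  case: (eqVneq v u) => [-> | nvu]; last first.
    by case: (B _ _); case: (two_edge _ _ _).
  case: (eqVneq U T) => [-> | nUT] /=; first by rewrite !orbT tT.
  rewrite !orbF.
  have := nE' U; case: (B (inr u) (inl U)) => //= /(_ isT) /negbTE ->.
  by rewrite !andbF.
have nA : (u, T) \notin A.
  by rewrite inE /=; apply: contraNN nE => h; apply/existsP; exists T.
by rewrite cardsU1 nA add1n ltnn.
Qed.
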